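(* For every positive integer $r$ there exists a Heffter space with exactly $r$ parallel classes.
   Context: A half-set of an abelian group $G$ of odd order $2v+1\ge7$ is a subset $V\subseteq G\setminus\{0\}$ containing exactly one element of each pair $\{g,-g\}$, $g\ne0$. A Heffter system on $V$ with block size $k$ is a partition of $V$ into blocks of size $k$, each summing to $0$ in $G$. A Heffter space over $G$ is a partial linear space (any two distinct points lie in at most one block) with point set a half-set $V$ of $G$, together with a resolution of its blocks into parallel classes (each a partition of $V$), every parallel class being a Heffter system on $V$; its degree is the number of parallel classes. *)

(* Defs.v *)
From HB Require Import structures.
From mathcomp Require Import all_boot all_order all_algebra.
Set Implicit Arguments. Unset Strict Implicit. Unset Printing Implicit Defensive.
Import GRing.Theory.
Local Open Scope ring_scope.

Definition half_set (G : finZmodType) (V : {set G}) : Prop :=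
  (0 \notin V) /\ (forall g : G, g != 0 -> (g \in V) != (- g \in V)).

Definition heffter_system (G : finZmodType) (V : {set G}) (k : nat)
    (P : {set {set G}}) : Prop :=
  partition P V /\
  (forall B, B \in P -> #|B| = k /\ \sum_(x in B) x = 0).

(* A Heffter space over G with point set the half-set V, block size k and
   degree r: r parallel classes P i (i < r), each a Heffter system on V,
   such that the blocks of all classes (counted with their class index)
   form a partial linear space: two distinct blocks share at most one point. *)
Definition heffter_space (G : finZmodType) (V : {set G}) (k r : nat)
    (P : 'I_r -> {set {set G}}) : Prop :=
  half_set V /\
  (forall i, heffter_system V k (P i)) /\
  (forall (i j : 'I_r) (B B' : {set G}), B \in P i -> B' \in P j ->
     (i, B) != (j, B') -> (#|B :&: B'| <= 1)%N).

(* Main.v *)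
Require Import Defs.
From mathcomp Require Import all_boot all_order all_algebra.
From HB Require Import structures.
From mathcomp Require Import finfield cyclic zify.
Set Implicit Arguments. Unset Strict Implicit. Unset Printing Implicit Defensive.
Module ArithM.

Definition Rw (c : nat -> nat) (i : nat) := \prod_(j < i) c j.

Lemma Rw_gt0 c i : (forall j, 0 < c j) -> 0 < Rw c i.
Proof. by move=> h; rewrite /Rw; apply: prodn_gt0. Qed.

Lemma RwS c i : Rw c i.+1 = Rw c i * c i.
Proof. by rewrite /Rw big_ord_recr. Qed.

Lemma mr_bound r (c : nat -> nat) (w : 'I_r -> nat) :
  (forall i, w i < c i) -> \sum_(i < r) Rw c i * w i < Rw c r.
Proof.
elim: r w => [|r IH] w hw; first by rewrite big_ord0 /Rw big_ord0.
rewrite big_ord_recr /= RwS.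
have := IH (fun i => w (widen_ord (leqnSn r) i)) (fun i => hw _).
have := hw ord_max; rewrite /=.
move: (\sum_(i < r) _) (Rw c r) (w ord_max) (c r) => a b x y h1 h2.
have: b * x.+1 <= b * y by rewrite leq_mul2l h1 orbT.
nia.
Qed.

Lemma mr_inj r (c : nat -> nat) (w w' : 'I_r -> nat) :
  (forall j, 0 < c j) ->
  (forall i, w i < c i) -> (forall i, w' i < c i) ->
  \sum_(i < r) Rw c i * w i = \sum_(i < r) Rw c i * w' i -> w =1 w'.
Proof.
move=> cpos; elim: r w w' => [|r IH] w w' hw hw' E; first by case.
move: E; rewrite !big_ord_recr /=.
have b1 := mr_bound (fun i => hw (widen_ord (leqnSn r) i)).
have b2 := mr_bound (fun i => hw' (widen_ord (leqnSn r) i)).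
have Rp := Rw_gt0 r cpos.
set a := \sum_(i < r) _ in b1 *; set a' := \sum_(i < r) _ in b2 *.
move=> E.
have ea : a = a'.
  have := congr1 (modn^~ (Rw c r)) E.
  by rewrite ![_ + Rw c r * _]addnC ![Rw c r * _]mulnC !modnMDl !modn_small.
have ex : w ord_max = w' ord_max.
  have := congr1 (divn^~ (Rw c r)) E.
  rewrite ![_ + Rw c r * _]addnC ![Rw c r * _]mulnC !divnMDl // !divn_small //.
  by rewrite !addn0.
have IH' := IH (fun i => w (widen_ord (leqnSn r) i)) (fun i => w' (widen_ord (leqnSn r) i))
  (fun i => hw _) (fun i => hw' _) ea.
move=> i; case: (ltnP i r) => h.
  have -> : i = widen_ord (leqnSn r) (Ordinal h) by apply: val_inj.
  exact: IH'.
have -> : i = ord_max by apply: val_inj => /=; have := ltn_ord i; lia.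
exact: ex.
Qed.

Section CRT.
Variables (r : nat) (p : nat -> nat).
Hypotheses (hp : forall i, prime (p i)) (hpd : forall i j, i != j -> p i != p j).
Definition kk := \prod_(i < r) p i.
Definition cc (n : nat) := \prod_(i < r | (i : nat) != n) p i.

Lemma k_split (j : 'I_r) : kk = p j * cc j.
Proof. by rewrite /kk (bigD1 j) //=. Qed.

Lemma cop_pc (j : 'I_r) : coprime (p j) (cc j).
Proof.
rewrite /cc; apply: (big_ind (coprime (p j))) => //.
- exact: coprimen1.
- by move=> x y hx hy; rewrite coprimeMr hx hy.
move=> i ij; rewrite prime_coprime // dvdn_prime2 //.
by apply: hpd; rewrite eq_sym.
Qed.

Lemma dvd_pc (i j : 'I_r) : i != j -> p j %| cc i.
Proof.
move=> ij; rewrite /cc (bigD1 j) /=; last by rewrite eq_sym.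
exact: dvdn_mulr.
Qed.

Lemma crt_inj (u u' : 'I_r -> nat) :
  (forall i, u i < p i) -> (forall i, u' i < p i) ->
  \sum_(i < r) cc i * u i = \sum_(i < r) cc i * u' i %[mod kk] -> u =1 u'.
Proof.
move=> hu hu' E j.
have E2 : \sum_(i < r) cc i * u i = \sum_(i < r) cc i * u' i %[mod p j].
  have h : p j %| kk by rewrite (k_split j) dvdn_mulr.
  by rewrite -(modn_dvdm _ h) E (modn_dvdm _ h).
move: E2; rewrite (bigD1 j) //= [in X in _ = X %[mod _]](bigD1 j) //=.
have z1 : p j %| \sum_(i < r | i != j) cc i * u i.
  by apply: dvdn_sum => i ij; apply: dvdn_mulr; apply: dvd_pc.
have z2 : p j %| \sum_(i < r | i != j) cc i * u' i.
  by apply: dvdn_sum => i ij; apply: dvdn_mulr; apply: dvd_pc.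
rewrite -modnDmr (eqP z1) -[in RHS]modnDmr (eqP z2) !addn0.
clear E z1 z2.
have cop := cop_pc j.
have hpj := prime_gt0 (hp j).
wlog le : u u' hu hu' / u j <= u' j.
  move=> W; case: (leqP (u j) (u' j)) => h; first exact: W.
  move=> e; symmetry; apply: (W u' u) => //; first exact: ltnW.
move=> /eqP; rewrite eq_sym eqn_mod_dvd ?leq_mul2l ?le ?orbT // -mulnBr Gauss_dvdr //.
move=> d; apply/eqP; rewrite eqn_leq le /=.
have h1 := hu' j.
case: (posnP (u' j - u j)) => h0; first by lia.
have := dvdn_leq h0 d; lia.
Qed.
End CRT.

End ArithM.
Import ArithM.

Module EncM.

Section Enc.
Variables (r : nat) (p : nat -> nat).
Hypotheses (hp : forall i, prime (p i)) (hp2 : forall i, 2 < p i)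
  (hpd : forall i j, i != j -> p i != p j).
Let c := cc r p.
Let k := kk r p.
Let L := Rw c r.
Definition NN := L * k.

Lemma c_pos j : 0 < c j.
Proof. by apply: prodn_gt0 => i; apply: prime_gt0. Qed.

Lemma k_pos : 0 < k.
Proof. by apply: prodn_gt0 => i; apply: prime_gt0. Qed.

Lemma L_pos : 0 < L.
Proof. by apply: Rw_gt0; apply: c_pos. Qed.

Lemma NN_pow : NN = k ^ r.
Proof.
rewrite /NN /L /Rw {2}/k /kk -big_split /=.
rewrite (eq_bigr (fun _ => k)); first by rewrite prod_nat_const card_ord.
by move=> i _; rewrite mulnC -k_split.
Qed.

Lemma k_odd : odd k.
Proof.
rewrite /k /kk; apply: (big_ind odd) => // [x y hx hy|i _]; first by rewrite oddM hx hy.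
by case: (even_prime (hp i)) => // h; have := hp2 i; rewrite h.
Qed.

Lemma NN_odd : odd NN.
Proof. by rewrite NN_pow oddX k_odd orbT. Qed.

Notation T := {ffun 'I_r -> 'I_k}.
Definition UU (t : T) := \sum_(i < r) c i * (t i %% p i).
Definition WW (t : T) := \sum_(i < r) Rw c i * (t i %/ p i).
Definition EE (t : T) := L * UU t + WW t.

Lemma div_lt (t : T) i : t i %/ p i < c i.
Proof.
by rewrite ltn_divLR ?prime_gt0 // mulnC -k_split.
Qed.

Lemma WW_lt t : WW t < L.
Proof. exact: (mr_bound (fun i => div_lt t i)). Qed.

Lemma modLk U W : W < L -> (L * U + W) %% (L * k) = L * (U %% k) + W.
Proof.
move=> hW; rewrite {1}(divn_eq U k) mulnDr.
have -> : L * (U %/ k * k) = U %/ k * (L * k) by nia.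
rewrite -addnA modnMDl modn_small //.
have := ltn_pmod U k_pos; move: (U %% k) => u hu.
have : L * u.+1 <= L * k by rewrite leq_mul2l hu orbT.
nia.
Qed.

Lemma EE_inj t t' : EE t = EE t' %[mod NN] -> t = t'.
Proof.
rewrite /EE /NN !modLk ?WW_lt // => E.
have eW : WW t = WW t'.
  have := congr1 (modn^~ L) E.
  by rewrite ![L * _]mulnC !modnMDl !modn_small ?WW_lt.
have eU : UU t %% k = UU t' %% k.
  have := congr1 (divn^~ L) E.
  rewrite ![L * _]mulnC !divnMDl ?L_pos // !divn_small ?WW_lt //.
  by rewrite !addn0.
have h1 := crt_inj hp hpd (u := fun i => t i %% p i) (u' := fun i => t' i %% p i)
  (fun i => ltn_pmod _ (prime_gt0 (hp i))) (fun i => ltn_pmod _ (prime_gt0 (hp i))) eU.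
have h2 := mr_inj (c := c) (w := fun i => t i %/ p i) (w' := fun i => t' i %/ p i)
  c_pos (div_lt t) (div_lt t') eW.
apply/ffunP => i; apply: val_inj => /=.
by rewrite (divn_eq (t i) (p i)) (divn_eq (t' i) (p i)) h1 h2.
Qed.
End Enc.

End EncM.
Import EncM.

Module CubeM.
Import GRing.Theory.

Section Cube.
Variables (G : finZmodType) (X : finType) (r k : nat).
Notation T := {ffun 'I_r -> 'I_k}.
Variable (Phi : X * T -> G).
Definition upd (t : T) (i : 'I_r) (y : 'I_k) : T :=
  [ffun l => if l == i then y else t l].
Definition line i (z : X * T) : {set G} := [set Phi (z.1, upd z.2 i y) | y : 'I_k].
Definition cls i : {set {set G}} := [set line i z | z : X * T].
Definition Vset : {set G} := [set Phi z | z : X * T].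
Hypotheses (Phi_inj : injective Phi) (hs : half_set Vset) (k_gt0 : (0 < k)%N)
  (sum0 : forall i z, (\sum_(y : 'I_k) Phi (z.1, upd z.2 i y) = 0)%R).

Lemma upd_inj t i : injective (upd t i).
Proof. by move=> y y' /ffunP /(_ i); rewrite !ffunE eqxx. Qed.

Lemma line_meet i z z' x : x \in line i z -> x \in line i z' -> line i z = line i z'.
Proof.
case/imsetP=> y _ ->; case/imsetP=> y' _ /Phi_inj [e1 e2].
have E : forall y0, upd z.2 i y0 = upd z'.2 i y0.
  move=> y0; apply/ffunP=> l; rewrite !ffunE; case: eqP => // /eqP nl.
  by move/ffunP: e2 => /(_ l); rewrite !ffunE (negbTE nl).
by apply: eq_imset => y0; rewrite e1 E.
Qed.

Lemma line_card i z : #|line i z| = k.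
Proof.
rewrite card_imset ?card_ord //.
by move=> y y' /Phi_inj [] /upd_inj.
Qed.

Lemma line_sum i z : (\sum_(x in line i z) x = 0)%R.
Proof.
rewrite big_imset /=; last first.
  by move=> y y' _ _ /Phi_inj [] /upd_inj.
exact: sum0.
Qed.

Lemma upd_id (t : T) i : upd t i (t i) = t.
Proof. by apply/ffunP=> l; rewrite ffunE; case: eqP => // ->. Qed.

Lemma cube_heffter : heffter_space Vset k cls.
Proof.
split => //; split.
  move=> i; split; last first.
    by move=> B /imsetP [z _ ->]; rewrite line_card line_sum.
  apply/and3P; split.
  - apply/eqP/setP => x; apply/bigcupP/imsetP.
      case=> B /imsetP [z _ ->] /imsetP [y _ ->]; by exists (z.1, upd z.2 i y).
    case=> z _ ->; exists (line i z); first by apply/imsetP; exists z.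
    apply/imsetP; exists (z.2 i) => //; by rewrite upd_id -surjective_pairing.
  - apply/trivIsetP => A B /imsetP [z _ ->] /imsetP [z' _ ->] ne.
    apply/pred0P => x /=; apply/negP => /andP [h1 h2].
    by move/eqP: ne; apply; exact: line_meet h1 h2.
  - apply/imsetP => [[z _ /esym/setP E]].
    have := E (Phi (z.1, upd z.2 i (Ordinal k_gt0))).
    by rewrite inE imset_f.
move=> i j B B' /imsetP [z _ ->] /imsetP [z' _ ->] ne.
case: (eqVneq i j) => [eij | nij].
  subst j.
  have ne' : line i z != line i z'.
    by apply: contra ne => /eqP ->.
  rewrite leq_eqVlt; apply/orP; right; rewrite ltnS leqn0 cards_eq0.
  apply/eqP/setP => x; rewrite !inE; apply/negP => /andP [h1 h2].
  by move/eqP: ne'; apply; exact: line_meet h1 h2.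
apply/card_le1_eqP => x1 x2; rewrite !inE.
case/andP=> /imsetP [y1 _ ->] /imsetP [y1' _ E1].
case/andP=> /imsetP [y2 _ ->] /imsetP [y2' _ E2].
move/Phi_inj: E1 => [_ /ffunP /(_ i)]; rewrite !ffunE eqxx (negbTE nij) => ->.
move/Phi_inj: E2 => [_ /ffunP /(_ i)]; rewrite !ffunE eqxx (negbTE nij) => ->.
by [].
Qed.
End Cube.

End CubeM.
Import CubeM.

Module FldM.
Import GRing.Theory.

Lemma sum_split (R : zmodType) a b (f : nat -> R) :
  (\sum_(0 <= y < a * b) f y = \sum_(0 <= w < a) \sum_(0 <= u < b) f (w * b + u))%R.
Proof.
elim: a => [|a IH]; first by rewrite mul0n !big_geq.
rewrite big_nat_recr //= -IH mulSn addnC (big_cat_nat _ (leq_addr b (a * b))) //=.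
congr (_ + _)%R.
rewrite -{1}(add0n (a * b)) big_addn.
rewrite addKn.
by apply: eq_bigr => u _; rewrite addnC.
Qed.

Local Open Scope ring_scope.
Lemma geom_sum0 (F : fieldType) (z : F) m : z ^+ m = 1 -> z != 1 ->
  (\sum_(i < m) z ^+ i = 0)%R.
Proof.
move=> zm z1; have := subrX1 z m; rewrite zm subrr => /esym/eqP.
by rewrite mulf_eq0 subr_eq0 (negbTE z1) /= => /eqP.
Qed.

Lemma odd_split n : odd n -> n = (n./2 * 2 + 1)%N.
Proof. by move=> h; rewrite -{1}(odd_double_half n) h -muln2 addnC. Qed.

Lemma e1_lemma a M e : (a + 2 * M * e = e * (2 * M) + a)%N.
Proof. lia. Qed.

Lemma e2_lemma a e M N : N = (N./2 * 2 + 1)%N ->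
  (M * N + (a + 2 * M * e) = (N./2 + e) * (2 * M) + (M + a))%N.
Proof. move: (N./2) => h ->; nia. Qed.

Lemma cardF_gt1 (F : finFieldType) : (1 < #|F|)%N.
Proof.
apply/card_gt1P; exists (0 : F), 1; split => //.
by rewrite eq_sym oner_neq0.
Qed.

Section Fld.
Variables (r : nat) (p : nat -> nat).
Hypotheses (hp : forall i, prime (p i)) (hp2 : forall i, (2 < p i)%N)
  (hpd : forall i j, i != j -> p i != p j).
Variables (F : finFieldType) (g : F) (M : nat).
Local Notation k := (kk r p).
Local Notation c := (cc r p).
Local Notation L := (Rw c r).
Local Notation N := (NN r p).
Hypotheses (hn : #|F|.-1 = (2 * M * N)%N) (hg : (#|F|.-1).-primitive_root g).
Local Notation T := {ffun 'I_r -> 'I_k}.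
Definition Phi (z : 'I_M * T) : F := g ^+ (z.1 + 2 * M * EE z.2).

Lemma exp_eq a b : g ^+ a = g ^+ b -> a = b %[mod 2 * M * N].
Proof. by move/eqP; rewrite (eq_prim_root_expr hg) hn => /eqP. Qed.

Lemma key a a' E E' : (a < M -> a' < M ->
  a + 2 * M * E = a' + 2 * M * E' %[mod 2 * M * N] -> a = a' /\ E = E' %[mod N])%N.
Proof.
move=> ha ha' H.
have Mp : (0 < M)%N by lia.
have h2 : (2 * M %| 2 * M * N)%N by apply: dvdn_mulr.
have H2 := congr1 (modn^~ (2 * M)%N) H; rewrite /= !(modn_dvdm _ h2) in H2.
rewrite ![(_ + 2 * M * _)%N]addnC ![(2 * M * _)%N]mulnC !modnMDl !modn_small in H2; try lia.
subst a'; split => //.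
move/eqP: H; rewrite eqn_modDl -!muln_modr => /eqP /eqP.
by rewrite eqn_pmul2l ?muln_gt0 // => /eqP.
Qed.

Lemma Phi_inj : injective Phi.
Proof.
move=> [a t] [a' t'] /exp_eq /= /key [] // ea eE.
by rewrite (EE_inj hp hpd eE); congr pair; apply: val_inj.
Qed.

Lemma N_pos : (0 < N)%N.
Proof. by rewrite NN_pow expn_gt0 k_pos. Qed.

Lemma neg1 : (0 < M)%N -> g ^+ (M * N) = -1.
Proof.
move=> Mp; have : (g ^+ (M * N)) ^+ 2 == 1.
  rewrite -exprM; have -> : (M * N * 2 = #|F|.-1)%N by rewrite hn; nia.
  by rewrite prim_expr_order.
rewrite sqrf_eq1 => /orP [|/eqP //].
rewrite -(prim_order_dvd hg) hn => /dvdn_leq.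
have := N_pos; rewrite muln_gt0 Mp /= => Np /(_ Np).
nia.
Qed.

Lemma Phi_neg z z' : Phi z != - Phi z'.
Proof.
case: z z' => [[a ha] t] [[a' ha'] t']; apply/eqP.
have Mp : (0 < M)%N by lia.
rewrite /Phi /= -mulN1r -(neg1 Mp) -exprD => /exp_eq H.
have h2 : (2 * M %| 2 * M * N)%N by apply: dvdn_mulr.
have H2 := congr1 (modn^~ (2 * M)%N) H; rewrite /= !(modn_dvdm _ h2) in H2.
clear H.
have eN := odd_split (NN_odd r hp hp2).
rewrite (e1_lemma a M (EE t)) (e2_lemma a' (EE t') M eN) !modnMDl !modn_small in H2; lia.
Qed.

Definition Rest (i : 'I_r) (t : T) :=
  (L * \sum_(j < r | j != i) c j * (t j %% p j) + \sum_(j < r | j != i) Rw c j * (t j %/ p j))%N.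

Lemma EE_upd i t y :
  EE (upd t i y) = (L * c i * (y %% p i) + Rw c i * (y %/ p i) + Rest i t)%N.
Proof.
rewrite /EE /UU /WW /Rest (bigD1 i) //= [in X in (_ + X)%N](bigD1 i) //= !ffunE eqxx.
have e1 : (\sum_(j < r | j != i) c j * (upd t i y j %% p j) =
          \sum_(j < r | j != i) c j * (t j %% p j))%N.
  by apply: eq_bigr => j ji; rewrite ffunE (negbTE ji).
have e2 : (\sum_(j < r | j != i) Rw c j * (upd t i y j %/ p j) =
          \sum_(j < r | j != i) Rw c j * (t j %/ p j))%N.
  by apply: eq_bigr => j ji; rewrite ffunE (negbTE ji).
rewrite e1 e2 mulnDr mulnA -!addnA; congr (_ + _); exact: addnCA.
Qed.

Lemma sum0 i z : \sum_(y : 'I_k) Phi (z.1, upd z.2 i y) = 0.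
Proof.
set w := g ^+ (2 * M).
pose A (y : nat) := (L * c i * (y %% p i) + Rw c i * (y %/ p i))%N.
have E y : Phi (z.1, upd z.2 i y) = g ^+ (z.1 + 2 * M * Rest i z.2) * w ^+ A y.
  rewrite /Phi /= EE_upd -exprM -exprD; congr (_ ^+ _); rewrite /A; nia.
rewrite (eq_bigr _ (fun y _ => E y)) -mulr_sumr.
suff -> : \sum_(y < k) w ^+ A y = 0 by rewrite mulr0.
have Mp : (0 < M)%N := leq_ltn_trans (leq0n _) (ltn_ord z.1).
have cp : (0 < c i)%N by apply: c_pos.
have Lp : (0 < L)%N by apply: Rw_gt0 => j; apply: c_pos.
have pp := prime_gt0 (hp i).
set z0 := w ^+ (L * c i).
have zp : z0 ^+ p i = 1.
  rewrite /z0 /w -!exprM -(prim_expr_order hg) hn; congr (_ ^+ _).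
  rewrite /NN (k_split p i); nia.
have z1 : z0 != 1.
  rewrite /z0 /w -!exprM -(prim_order_dvd hg) hn.
  apply/negP => /dvdn_leq; rewrite !muln_gt0 Mp Lp cp /= => /(_ isT).
  rewrite /NN (k_split p i); have := hp2 i; nia.
rewrite -(big_mkord xpredT (fun y => w ^+ A y)) (k_split p i) mulnC sum_split.
apply: big1 => v _.
rewrite (eq_big_nat _ _ (F2 := fun u => w ^+ (Rw c i * v) * z0 ^+ u)); last first.
  move=> u /andP [_ hu]; rewrite /A modnMDl modn_small // divnMDl // divn_small //.
  by rewrite addn0 /z0 -exprM -exprD addnC.
by rewrite -mulr_sumr big_mkord geom_sum0 ?mulr0.
Qed.

Lemma Phi_nz z : Phi z != 0.
Proof.
rewrite /Phi expf_eq0 negb_and; apply/orP; right.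
apply/eqP => g0; have := prim_expr_order hg; rewrite g0 expr0n.
have : (0 < #|F|.-1)%N.
  by have := cardF_gt1 F; lia.
by move=> np; rewrite eqn0Ngt np /= => /eqP; rewrite eq_sym oner_eq0.
Qed.

Lemma card_V : #|Vset Phi| = (M * N)%N.
Proof.
by rewrite card_imset; [rewrite card_prod card_ffun !card_ord NN_pow | exact: Phi_inj].
Qed.

Lemma half_V : half_set (Vset Phi).
Proof.
split.
  by apply/imsetP => [[z _ /esym/eqP]]; apply/negP; exact: Phi_nz.
move=> x x0.
case hx: (x \in Vset Phi); case hy: (- x \in Vset Phi) => //=.
  case/imsetP: hx => z _ ez; case/imsetP: hy => z' _ ez'.
  by move/eqP: (Phi_neg z' z); rewrite -ez' -ez.
pose W := Vset Phi :|: [set - v | v in Vset Phi].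
have hI : Vset Phi :&: [set - v | v in Vset Phi] = set0.
  apply/setP => v; rewrite !inE; apply/negP => /andP [/imsetP [z _ ->]].
  case/imsetP => v' /imsetP [z' _ ->] e.
  by move/eqP: (Phi_neg z z'); rewrite e.
have cW : #|W| = #|F|.-1.
  rewrite cardsU hI cards0 subn0 (card_imset _ (@oppr_inj _)).
  by rewrite card_V hn; lia.
have sW : W \subset [set~ 0] :\ x.
  apply/subsetP => v; rewrite !inE => /orP [hv|].
    rewrite andbC; apply/andP; split.
      by case/imsetP: hv => z _ ->; exact: Phi_nz.
    by apply: contraFN hx => /eqP <-.
  case/imsetP => v' hv' ->; apply/andP; split.
    by apply: contraFN hy => /eqP <-; rewrite opprK.
  by rewrite oppr_eq0; case/imsetP: hv' => z _ ->; exact: Phi_nz.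
have := subset_leq_card sW.
have := cardsD1 x [set~ (0 : F)]; rewrite cardsC1 !inE x0 /=.
rewrite cW => ->; by rewrite add1n ltnn.
Qed.
End Fld.

End FldM.
Import FldM.

Module MainM.
Import GRing.Theory.

Fixpoint pr (n : nat) : nat :=
  match n with 0 => s2val (prime_above 2) | n'.+1 => s2val (prime_above (pr n')) end.

Lemma pr_prime i : prime (pr i).
Proof. by case: i => [|i] /=; case: prime_above. Qed.

Lemma pr_lt i : pr i < pr i.+1.
Proof. by rewrite /=; case: prime_above. Qed.

Lemma pr_gt2 i : 2 < pr i.
Proof.
elim: i => [|i IH]; first by rewrite /=; case: prime_above.
exact: ltn_trans IH (pr_lt i).
Qed.

Lemma pr_mono i j : i < j -> pr i < pr j.
Proof.
elim: j => [//|j IH]; rewrite ltnS leq_eqVlt => /orP [/eqP ->|h].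
  exact: pr_lt.
exact: ltn_trans (IH h) (pr_lt j).
Qed.

Lemma pr_inj i j : i != j -> pr i != pr j.
Proof.
rewrite neq_ltn => /orP [h|h]; rewrite neq_ltn.
  by rewrite pr_mono.
by rewrite (pr_mono h) orbT.
Qed.

Lemma prim_root_exists (F : finFieldType) : exists g : F, ((#|F|.-1).-primitive_root g)%R.
Proof.
have n0 : 0 < #|F|.-1 by have := cardF_gt1 F; lia.
have H : has (#|F|.-1).-primitive_root%R (enum (predC1 (0 : F)%R)).
  apply: has_prim_root n0 _ _ _.
  - apply/allP => x; rewrite mem_enum /= => x0.
    rewrite unity_rootE; apply/eqP; apply: (mulfI x0).
    rewrite -exprS prednK; first by rewrite expf_card mulr1.
    exact: ltnW (cardF_gt1 F).
  - exact: enum_uniq.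
  - by rewrite -cardE cardC1.
by case/hasP: H => g _ hg; exists g.
Qed.

Lemma lem_a N : 0 < N -> 1 < 2 * N.
Proof. lia. Qed.
Lemma lem_b N : 0 < N -> (2 * N < 2) = false.
Proof. lia. Qed.
Lemma lem_c N P : 2 < N -> 2 * N < P -> 7 <= P.
Proof. lia. Qed.

End MainM.
Import MainM.

Theorem mainTheorem12 (r : nat) : (0 < r)%N ->
  exists (G : finZmodType) (V : {set G}) (k : nat) (P : 'I_r -> {set {set G}}),
    odd #|G| /\ (7 <= #|G|)%N /\ heffter_space V k P.
Proof.
move=> r0.
pose N := NN r pr.
have hp := pr_prime; have hp2 := pr_gt2; have hpd := pr_inj.
have Np : 0 < N by apply: N_pos.
have N3 : 3 <= N.
  rewrite /N NN_pow; have := k_split pr (Ordinal r0); rewrite /= => ek.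
  have cp : 0 < cc r pr 0 by apply: c_pos.
  have kp : 0 < kk r pr by rewrite ek muln_gt0 (prime_gt0 (pr_prime 0)) cp.
  have := leq_pexp2l kp r0; rewrite expn1.
  move: (kk r pr ^ r) => x; have := pr_gt2 0; move: ek; rewrite /=; nia.
case: (prime_above (2 * N)) => P hP Pp.
pose e := totient (2 * N).
have e0 : 0 < e by rewrite totient_gt0; lia.
case: (pPrimePowerField Pp e0) => F _ cardF.
have cop : coprime P (2 * N).
  rewrite prime_coprime //; apply/negP => /dvdn_leq; lia.
have eul := Euler_exp_totient cop.
have Pe1 : 1 <= P ^ e by rewrite expn_gt0 prime_gt0.
have dv : 2 * N %| P ^ e - 1.
  by rewrite -eqn_mod_dvd // eul modn_small // (lem_a Np).
pose M := (#|F|.-1) %/ (2 * N).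
have hn : #|F|.-1 = 2 * M * N.
  have dq : 2 * N %| #|F|.-1 by rewrite cardF -subn1.
  rewrite /M; have := divnK dq; move: (#|F|.-1 %/ (2 * N)) => m <-.
  by rewrite mulnA [m * 2]mulnC.
case: (prim_root_exists F) => g hg.
exists F, (Vset (Phi (r := r) (p := pr) g (M := M))), (kk r pr), (cls (Phi (r := r) (p := pr) g (M := M))).
split.
  rewrite cardF oddX; case: (even_prime Pp) => [P2|->]; last by rewrite orbT.
  by move: hP; rewrite P2 (lem_b Np).
split.
  have := leq_pexp2l (prime_gt0 Pp) e0; rewrite expn1 cardF.
  exact: leq_trans (lem_c N3 hP).
apply: cube_heffter.
- exact: Phi_inj hn hg.
- exact: half_V hn hg.
- by apply: k_pos.
- exact: sum0 hn hg.
Qed.
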